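(* For each integer $N\ge 1$ let $\Gamma_N$ be the $(N+1,2)$-PPCFG with nonterminals $\{\mathtt{START},X_1,\dots,X_N\}$, terminals $\{0,1\}$, start symbol $\mathtt{START}$, and the following $N+1$ production groups: the group $(\mathtt{START}\to X_1X_2\cdots X_N,\ \mathtt{START}\to X_1X_2\cdots X_N)$, and for each $k\in\{1,\dots,N\}$ the group $(X_k\to 0,\ X_k\to 1)$. Consider any (deterministic) learning algorithm that, for every parameter setting $p^*\in\{1,2\}^{N+1}$ taken as the unknown target, interacts with a membership oracle for $L(\Gamma_{N,p^*})$ and an equivalence oracle for $L(\Gamma_{N,p^*})$ (whose hypotheses are of the form $\Gamma_{N,p}$, and which answers ``true'' if $L(\Gamma_{N,p})=L(\Gamma_{N,p^*})$ and otherwise returns a string in the symmetric difference $L(\Gamma_{N,p})\,\Delta\,L(\Gamma_{N,p^*})$), and which eventually outputs a parameter setting $p$ with $L(\Gamma_{N,p})=L(\Gamma_{N,p^*})$. Then there is a target $p^*$ and a choice of oracle answers consistent with it for which the algorithm makes at least $2^N-1$ queries. Consequently, there is no algorithm that learns the PPCFGs from equivalence and membership queries using a number of queries bounded by a polynomial in $n$ and $k$.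
   Context: An $(n,k)$-principled parametric context-free grammar ($(n,k)$-PPCFG) is a 4-tuple $\Gamma=(V,\Sigma,\Pi,S)$ where $V$ is a finite set of nonterminals, $\Sigma$ a finite set of terminals, $S\in V$ the start symbol, and $\Pi$ a list of $n$ production groups, the $i$-th group being a $k$-tuple of context-free productions $\Pi_{i,1},\dots,\Pi_{i,k}$, each of the form $A\to\alpha$ with $A\in V$, $\alpha\in(V\cup\Sigma)^*$. A parameter setting is $p=(p_1,\dots,p_n)$ with each $p_i\in\{1,\dots,k\}$; $\Gamma_p$ denotes the ordinary context-free grammar $(V,\Sigma,R,S)$ with $R=\{\Pi_{i,p_i}: 1\le i\le n\}$, and $L(\Gamma_p)$ its language. A membership oracle for $L$ takes a string $w$ and answers whether $w\in L$. The class of PPCFGs is learnable from equivalence and membership queries if there is an algorithm which, for every PPCFG $\Gamma$ and every target language of the form $L(\Gamma_{p^*})$, after finitely many queries outputs some $p$ with $L(\Gamma_p)=L(\Gamma_{p^*})$; it does so efficiently if the number of queries is bounded by a polynomial in $n$ and $k$. *)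

(* Defs.v *)
From mathcomp Require Import all_boot.
Set Implicit Arguments. Unset Strict Implicit. Unset Printing Implicit Defensive.

(* Groups and alternatives are
   0-indexed ('I_n, 'I_k) instead of 1..n, 1..k. *)
Record ppcfg := PPCFG {
  nonterm : Type;
  term : Type;
  start : nonterm;
  ngroups : nat;
  arity : nat;
  prods : 'I_ngroups -> 'I_arity -> nonterm * seq (nonterm + term)
}.

Definition param (G : ppcfg) := 'I_(ngroups G) -> 'I_(arity G).

Inductive step (G : ppcfg) (p : param G) :
  seq (nonterm G + term G) -> seq (nonterm G + term G) -> Prop :=
| step_rule (i : 'I_(ngroups G)) (u v : seq (nonterm G + term G)) :
    step p (u ++ inl (prods i (p i)).1 :: v) (u ++ (prods i (p i)).2 ++ v).

Inductive derives (G : ppcfg) (p : param G) :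
  seq (nonterm G + term G) -> seq (nonterm G + term G) -> Prop :=
| derives_refl s : derives p s s
| derives_step s t r : step p s t -> derives p t r -> derives p s r.

Definition lang (G : ppcfg) (p : param G) (w : seq (term G)) : Prop :=
  derives p [:: inl (start G)] (map inr w).

Definition same_lang (G : ppcfg) (p q : param G) : Prop :=
  forall w, lang p w <-> lang q w.

(* A deterministic learning algorithm, as a (well-founded) decision tree:
   output a parameter setting, ask a membership query w (answer: bool), or
   ask an equivalence query with hypothesis Gamma_h (answer: None = "true",
   Some w = a counterexample w). *)
Inductive learner (Sig P : Type) :=
| LOut (p : P)
| LMem (w : seq Sig) (k : bool -> learner Sig P)
| LEq (h : P) (k : option (seq Sig) -> learner Sig P).

Definition glearner (G : ppcfg) := learner (term G) (param G).

(* run G ps A n p : along some sequence of oracle answers consistent with the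
   target L(Gamma_ps), learner A makes n queries and then outputs p. *)
Inductive run (G : ppcfg) (ps : param G) : glearner G -> nat -> param G -> Prop :=
| run_out p : run ps (LOut _ p) 0 p
| run_mem w (b : bool) k n p :
    (b <-> lang ps w) -> run ps (k b) n p -> run ps (LMem w k) n.+1 p
| run_eq_yes h k n p :
    same_lang h ps -> run ps (k None) n p -> run ps (LEq h k) n.+1 p
| run_eq_no h w k n p :
    (lang h w <-> ~ lang ps w) -> run ps (k (Some w)) n p -> run ps (LEq h k) n.+1 p.

Definition learns (G : ppcfg) (A : glearner G) : Prop :=
  forall ps n p, run ps A n p -> same_lang p ps.

(* nonterminals: None = START, Some x = X_(x+1); terminals: false = 0, true = 1.
   group 0: (START -> X_1...X_N, START -> X_1...X_N);
   group i+1: (X_(i+1) -> 0, X_(i+1) -> 1). *)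
Definition GammaN_prods (N : nat) (i : 'I_N.+1) (j : 'I_2) :
    option 'I_N * seq (option 'I_N + bool) :=
  match unlift ord0 i with
  | None => (None, [seq inl (Some x) | x <- enum 'I_N])
  | Some x => (Some x, [:: inr (j != ord0)])
  end.

Definition GammaN (N : nat) : ppcfg :=
  @PPCFG (option 'I_N) bool None N.+1 2 (@GammaN_prods N).

(* Main.v *)
Require Import Defs.
From mathcomp Require Import all_boot.
From mathcomp Require Import zify.
From Stdlib Require Import Classical.
Set Implicit Arguments. Unset Strict Implicit. Unset Printing Implicit Defensive.

Lemma run_exists (G : ppcfg) (ps : param G) (A : glearner G) : exists n p, run ps A n p.
Proof.
elim: A => [p|w k IH|h k IH].
- by exists 0, p; constructor.
- case: (classic (lang ps w)) => H.
  + have [n [p Hr]] := IH true. exists n.+1, p. apply: run_mem Hr. by split.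
  + have [n [p Hr]] := IH false. exists n.+1, p. apply: run_mem Hr. by split.
- case: (classic (same_lang h ps)) => H.
  + have [n [p Hr]] := IH None. exists n.+1, p. exact: run_eq_yes Hr.
  + have [w Hw] : exists w, ~ (lang h w <-> lang ps w).
      apply: NNPP => C; apply: H => w; apply: NNPP => C2; apply: C; by exists w.
    have [n [p Hr]] := IH (Some w). exists n.+1, p. apply: run_eq_no Hr.
    split => [Hh Hp|Hn]; first by apply: Hw; split.
    case: (classic (lang h w)) => // Hh; exfalso; apply: Hw; split => H'; by [].
Qed.

Definition bit N (ps : param (GammaN N)) (x : 'I_N) : bool := ps (lift ord0 x) != ord0.
Definition word N (ps : param (GammaN N)) : seq bool := [seq bit ps x | x <- enum 'I_N].
Definition expand N (ps : param (GammaN N)) (s : option 'I_N + bool) : seq bool :=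
  match s with inl None => word ps | inl (Some x) => [:: bit ps x] | inr b => [:: b] end.
Definition expall N (ps : param (GammaN N)) (s : seq (option 'I_N + bool)) :=
  flatten (map (@expand N ps) s).

Lemma step_inv N (ps : param (GammaN N)) s t : step ps s t -> expall ps s = expall ps t.
Proof.
case=> i u v. rewrite /expall !map_cat !flatten_cat /=. congr (_ ++ _).
congr (_ ++ _).
rewrite /GammaN_prods; case: (@unliftP N.+1 ord0 i) => [x|] Hi; subst i.
  by [].

by rewrite /= -map_comp flatten_map1.
Qed.

Lemma derives_inv N (ps : param (GammaN N)) s t : derives ps s t -> expall ps s = expall ps t.
Proof. by elim=> // s1 t1 r1 /step_inv -> _. Qed.

Lemma expall_inr N (ps : param (GammaN N)) w : expall ps (map inr w) = w.
Proof. rewrite /expall; elim: w => //= b w ->. by []. Qed.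

Lemma step_cat G (ps : param G) u s t : step ps s t -> step ps (u ++ s) (u ++ t).
Proof. case=> i u' v. have := step_rule ps i (u ++ u') v. by rewrite -!catA. Qed.

Lemma derives_cat G (ps : param G) u s t : derives ps s t -> derives ps (u ++ s) (u ++ t).
Proof.
elim=> [s1|s1 t1 r1 H _ IH]; first exact: derives_refl.
exact: derives_step (step_cat u H) IH.
Qed.

Lemma derive_all N (ps : param (GammaN N)) (s : seq 'I_N) :
  derives ps [seq inl (Some x) | x <- s] [seq inr (bit ps x) | x <- s].
Proof.
elim: s => [|x s IH] /=; first exact: derives_refl.
have := step_rule ps (lift ord0 x) [::] [seq inl (Some y) | y <- s].
rewrite /= /GammaN_prods liftK /= => H.
apply: derives_step H _.
exact: (@derives_cat (GammaN N) ps [:: inr (bit ps x)] _ _ IH).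
Qed.

Lemma lang_char N (ps : param (GammaN N)) w : lang ps w <-> w = word ps.
Proof.
split.
  move/derives_inv; rewrite expall_inr => <-. by rewrite /expall /= cats0.
move=> ->. rewrite /lang.
have := step_rule ps ord0 [::] [::].
rewrite /= /GammaN_prods unlift_none /= cats0 => H.
apply: derives_step H _. rewrite /word -map_comp.
exact: derive_all.
Qed.

Lemma word_size N (ps : param (GammaN N)) : size (word ps) == N.
Proof. by rewrite size_map size_enum_ord. Qed.
Definition wordt N (ps : param (GammaN N)) : N.-tuple bool := Tuple (word_size ps).

Definition param_of N (t : N.-tuple bool) : param (GammaN N) :=
  fun i : 'I_N.+1 => match unlift ord0 i with
          | Some x => if tnth t x then (ord_max : 'I_2) else ord0
          | None => ord0 end.

Lemma wordt_param_of N (t : N.-tuple bool) : wordt (param_of t) = t.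
Proof.
apply: val_inj => /=. rewrite /word -[RHS]map_tnth_enum. apply: eq_map => x.
by rewrite /bit /param_of liftK; case: (tnth t x).
Qed.

Lemma same_word N (p q : param (GammaN N)) : same_lang p q -> wordt p = wordt q.
Proof. move=> H; apply: val_inj => /=. apply/lang_char. apply/H. exact/lang_char. Qed.

Lemma adversary N (A : glearner (GammaN N)) (S : {set N.-tuple bool}) :
  S != set0 ->
  (forall ps n p, wordt ps \in S -> run ps A n p -> wordt p = wordt ps) ->
  exists ps n p, [/\ wordt ps \in S, run ps A n p & #|S| - 1 <= n].
Proof.
elim: A S => [p|w k IH|h k IH] S /set0Pn [t0 Ht0] Hc.
- exists (param_of t0), 0, p. split; [by rewrite wordt_param_of|constructor|].
  have: S \subset [set wordt p].
    apply/subsetP => t Ht; rewrite inE; apply/eqP.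
    have := Hc (param_of t) 0 p; rewrite wordt_param_of => H.
    by rewrite H //; constructor.
  move/subset_leq_card; rewrite cards1; lia.
- set B := [set t : N.-tuple bool | tval t == w].
  have HB : #|B| <= 1.
    apply/card_le1_eqP => x y; rewrite !inE => /eqP hx /eqP hy.
    apply: val_inj; rewrite /= hx hy //.
  set S' := S :\: B.
  have HS' : #|S| <= #|S'| + 1.
    rewrite cardsD; have := subset_leq_card (subsetIr S B);
    have := subset_leq_card (subsetIl S B); move=> h1 h2; have h3 := leq_trans h2 HB; lia.
  have cons ps : wordt ps \in S' -> (false <-> lang ps w).
    rewrite !inE => /andP [HnB _]; split => // /lang_char Hw.
    by move: HnB; rewrite /= Hw eqxx.
  case: (set_0Vmem S') => [E | [t Ht]].
    have [n [p Hr]] := run_exists (param_of t0) (LMem w k).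
    exists (param_of t0), n, p; rewrite wordt_param_of; split => //.
    rewrite E cards0 in HS'; lia.
  have Hc' : forall ps n p, wordt ps \in S' -> run ps (k false) n p -> wordt p = wordt ps.
    move=> ps n p HS Hr. apply: Hc; first by move: HS; rewrite inE => /andP[].
    apply: run_mem Hr. exact: cons.
  have [|ps [n [p [Hps Hr Hn]]]] := IH false S' _ Hc'; first by apply/set0Pn; exists t.
  exists ps, n.+1, p. split.
  + by move: Hps; rewrite inE => /andP[].
  + apply: run_mem Hr. exact: cons.
  + have : 0 < #|S'| by apply/card_gt0P; exists t.
    lia.
- set S' := S :\ wordt h.
  have HS' : #|S| <= #|S'| + 1.
    rewrite (cardsD1 (wordt h) S) addnC; case: (wordt h \in S) => //=. by rewrite addn0 leq_addr.
  have cons ps : wordt ps \in S' -> (lang h (word h) <-> ~ lang ps (word h)).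
    rewrite !inE => /andP [Hne _]; split => [_ /lang_char Hw|_].
      by move: Hne; rewrite (_ : wordt ps = wordt h) ?eqxx //; apply: val_inj.
    exact/lang_char.
  case: (set_0Vmem S') => [E | [t Ht]].
    have [n [p Hr]] := run_exists (param_of t0) (LEq h k).
    exists (param_of t0), n, p; rewrite wordt_param_of; split => //.
    rewrite E cards0 in HS'; lia.
  have Hc' : forall ps n p, wordt ps \in S' -> run ps (k (Some (word h))) n p -> wordt p = wordt ps.
    move=> ps n p HS Hr. apply: Hc; first by move: HS; rewrite inE => /andP[].
    apply: run_eq_no Hr. exact: cons.
  have [|ps [n [p [Hps Hr Hn]]]] := IH (Some (word h)) S' _ Hc'; first by apply/set0Pn; exists t.
  exists ps, n.+1, p. split.
  + by move: Hps; rewrite inE => /andP[].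
  + apply: run_eq_no Hr. exact: cons.
  + have : 0 < #|S'| by apply/card_gt0P; exists t.
    lia.
Qed.

Lemma part1 : forall N : nat, 1 <= N ->
     forall A : glearner (GammaN N), learns A ->
       exists (ps : param (GammaN N)) (n : nat) (p : param (GammaN N)),
         run ps A n p /\ 2 ^ N - 1 <= n.
Proof.
move=> N _ A HA.
have [||ps [n [p [_ Hr Hn]]]] := @adversary N A [set: N.-tuple bool].
- by apply/set0Pn; exists [tuple false | _ < N]; rewrite inE.
- move=> ps n p _ Hr; apply/same_word; exact: HA Hr.
exists ps, n, p; split => //; move: Hn; by rewrite cardsT card_tuple card_bool.
Qed.

Lemma big_enough c d : exists j, 2 <= j /\ j * d + 2 * c + 5 <= 2 ^ j.
Proof.
set m := d + 2 * c + 5.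
have Hm : m < 2 ^ m := ltn_expl m (isT : 1 < 2).
exists (m * 4); split; first lia.
rewrite expnM. move: Hm; set x := 2 ^ m => Hm.
have h1 : m * m <= x * x by apply: leq_mul; apply: ltnW.
have h2 : (m * m) * (m * m) <= (x * x) * (x * x) by apply: leq_mul.
rewrite (_ : x ^ 4 = (x * x) * (x * x)); last by rewrite !expnS expn0 muln1 !mulnA.
have hd : d <= m by rewrite /m; lia.
have hc : 2 * c + 5 <= m by rewrite /m; lia.
have a1 : m * 4 * d <= m * 4 * m by rewrite leq_mul2l hd orbT.
have a2 : 5 <= m * m by rewrite /m; nia.
have a3 : 5 * (m * m) <= (m * m) * (m * m) by rewrite leq_mul2r a2 orbT.
have a4 : m <= m * m by rewrite /m; nia.
clearbody m x. lia.
Qed.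

Theorem mainTheorem1 :
  (forall N : nat, 1 <= N ->
     forall A : glearner (GammaN N), learns A ->
       exists (ps : param (GammaN N)) (n : nat) (p : param (GammaN N)),
         run ps A n p /\ 2 ^ N - 1 <= n)
  /\
  ~ (exists (A : forall G : ppcfg, glearner G) (c d : nat),
       (forall G : ppcfg, learns (A G)) /\
       (forall (G : ppcfg) (ps : param G) (n : nat) (p : param G),
          run ps (A G) n p -> n <= c * (ngroups G + arity G) ^ d + c)).
Proof.
split; first exact: part1.
move=> [A [c [d [HL HB]]]].
have [j [Hj2 Hj]] := big_enough c d.
set N := 2 ^ j - 3.
have HN : 1 <= N by rewrite /N; lia.
have [ps [n [p [Hr Hn]]]] := part1 HN (HL (GammaN N)).
have := HB _ _ _ _ Hr => /=.
have -> : N.+1 + 2 = 2 ^ j by rewrite /N; lia.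
rewrite -expnM.
have h1 : 2 ^ (j * d) * 2 ^ (2 * c + 2) <= 2 ^ N.
  rewrite -expnD leq_pexp2l //; rewrite /N; lia.
have h2 : 2 * c + 2 < 2 ^ (2 * c + 2) := ltn_expl _ (isT : 1 < 2).
have h3 : 0 < 2 ^ (j * d) by rewrite expn_gt0.
move: h1 h2 h3 Hn; set y := 2 ^ (j * d); set z := 2 ^ (2 * c + 2); set P := 2 ^ N.
move=> h1 h2 h3 Hn.
have h4 : y * (2 * c + 2).+1 <= y * z by apply: leq_mul (leqnn y) h2.
nia.
Qed.
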